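(* For $k\ge1$, the linear simplex $\alpha$ code $\mathcal{S}_k^\alpha$ has type $(q^{sk};k,0,\dots,0)$.
   Context: Let $R$ be a finite commutative chain ring with maximal ideal $\langle\gamma\rangle$, nilpotency index $s$ and residue field $R/\langle\gamma\rangle\cong\mathbb{F}_q$. Fix coset representatives $T=\{e_0,\dots,e_{q-1}\}$ with $e_0=0,e_1=1$, ordered $e_0<\dots<e_{q-1}$; each $r\in R$ is uniquely $\sum_{i=0}^{s-1}r_i\gamma^i$, $r_i\in T$; order $R$ by $x>y$ iff $x_i>y_i$ in $T$ for the largest $i$ with $x_i\neq y_i$; list $R=\{\rho_0,\dots,\rho_{q^s-1}\}$ increasingly. $\mathbf{a}^{(m)}$ is the constant vector of length $m$. Define $G_1^\alpha=(\rho_0\ \cdots\ \rho_{q^s-1})$ and, for $k>1$, $G_k^\alpha$ as the $k\times q^{sk}$ matrix of $q^s$ column blocks, the $j$-th having first row $\boldsymbol{\rho_j}^{(q^{s(k-1)})}$ and $G_{k-1}^\alpha$ below. $\mathcal{S}_k^\alpha$ is the $R$-submodule of $R^{q^{sk}}$ generated by the rows of $G_k^\alpha$. A linear code $\mathcal{C}\subseteq R^n$ (an $R$-submodule) has type $(n;t_1,\dots,t_s)$ if $\mathcal{C}\cong\bigoplus_{i=1}^s (R/\langle\gamma^{s-i+1}\rangle)^{t_i}$ as $R$-modules (equivalently, up to column permutations and multiplication of columns by units it has a standard-form generator matrix with $t_i$ rows divisible exactly by $\gamma^{i-1}$ forming the diagonal block $\gamma^{i-1}I_{t_i}$); these $t_i$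 are unique. Type $(n;k,0,\dots,0)$ means $\mathcal{C}$ is free of rank $k$. *)

(* Defs.v *)
From HB Require Import structures.
From mathcomp Require Import all_boot all_order all_algebra.
Set Implicit Arguments. Unset Strict Implicit. Unset Printing Implicit Defensive.
Import GRing.Theory.
Local Open Scope ring_scope.

Section ChainRing.
Variables (R : finComNzRingType) (gamma : R) (s q : nat) (T : seq R).

Definition in_gamma (x : R) : bool := [exists y : R, x == gamma * y].

(* R is a finite commutative chain ring with maximal ideal <gamma> of
   nilpotency index s: every element outside <gamma> is a unit,
   gamma^s = 0 and gamma^(s-1) <> 0. *)
Definition chain_ring_data : Prop :=
  [/\ forall x : R, ~~ in_gamma x -> [exists y : R, x * y == 1],
      gamma ^+ s = 0 & gamma ^+ s.-1 != 0].

(* T = {e_0,...,e_{q-1}} (listed in its order e_0 < ... < e_{q-1})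
   is a set of coset representatives of R/<gamma>, e_0 = 0, e_1 = 1. *)
Definition coset_reps : Prop :=
  [/\ size T = q, T`_0 = 0, T`_1 = 1 &
      forall x : R, exists! i : 'I_q, in_gamma (x - T`_i)].

Definition digits (r : R) : option {ffun 'I_s -> 'I_q} :=
  [pick d : {ffun 'I_s -> 'I_q} | r == \sum_(i < s) T`_(d i) * gamma ^+ i].

Definition chain_lt (x y : R) : bool :=
  match digits x, digits y with
  | Some dx, Some dy =>
      [exists i : 'I_s, (dx i < dy i)%N &&
         [forall j : 'I_s, (i < j)%N ==> (dx j == dy j)]]
  | _, _ => false
  end.

Definition chain_le (x y : R) : bool := (x == y) || chain_lt x y.

Definition rho (j : nat) : R := nth 0 (sort chain_le (enum R)) j.

(* G_k^alpha : the k x q^(sk) matrix; column block j of G_k has first row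
   constant rho_j and G_{k-1} below, which unfolds to the formula:
   entry (i, j) = rho_{ (j div q^(s(k-1-i))) mod q^s }. *)
Definition simplex_alpha (k : nat) : 'M[R]_(k, q ^ (s * k)) :=
  \matrix_(i < k, j < q ^ (s * k))
     rho ((j %/ q ^ (s * (k - 1 - i))) %% q ^ s).

Definition simplex_code (k : nat) : pred 'rV[R]_(q ^ (s * k)) :=
  fun v => [exists x : 'rV[R]_k, v == x *m simplex_alpha k].

End ChainRing.

(* A linear code C in R^n has type (n; k, 0, ..., 0), i.e. C is isomorphic as
   an R-module to R^k (free of rank k). *)
Definition free_of_rank (R : comNzRingType) (n : nat) (C : pred 'rV[R]_n)
    (k : nat) : Prop :=
  exists f : {linear 'rV[R]_k -> 'rV[R]_n},
    injective f /\ (forall v, C v <-> exists x, v = f x).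

Arguments simplex_alpha {R} gamma s q T k.
Arguments simplex_code {R} gamma s q T k _.
Arguments digits {R} gamma s q T r.
Arguments rho {R} gamma s q T j.

(* Main.v *)
Require Import Defs.
From HB Require Import structures.
From mathcomp Require Import all_boot all_order all_algebra zify.
Local Open Scope ring_scope.
Import GRing.Theory.

Section S.
Variables (R : finComNzRingType) (gamma : R) (s q : nat) (T : seq R).

Lemma expand_ex (HT : coset_reps gamma q T) n : forall r : R,
  exists f : nat -> 'I_q, exists y : R,
  r = \sum_(i < n) T`_(f i) * gamma ^+ i + gamma ^+ n * y.
Proof.
case: HT => _ _ _ HT.
elim: n => [|n IH] r.
  have [i0 _] := HT r.
  by exists (fun _ => i0), r; rewrite big_ord0 add0r expr0 mul1r.
have [i0 [/existsP [y /eqP Hy] _]] := HT r.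
have [f [y' Hy']] := IH y.
exists (fun i => if i is i'.+1 then f i' else i0), y'.
rewrite big_ord_recl /= expr0 mulr1.
rewrite -[r](subrK T`_i0) Hy Hy' mulrDr mulr_sumr.
rewrite [_ + T`_i0]addrC addrA; congr (_ + _ + _).
  by apply: eq_bigr => i _; rewrite exprS mulrCA.
by rewrite exprS mulrA.
Qed.

Lemma card_le (HT : coset_reps gamma q T) (Hs : gamma ^+ s = 0) :
  (#|R| <= q ^ s)%N.
Proof.
pose phi (d : {ffun 'I_s -> 'I_q}) := \sum_(i<s) T`_(d i) * gamma ^+ i.
have : [set: R] \subset phi @: [set: {ffun 'I_s -> 'I_q}].
  apply/subsetP => r _; have [f [y E]] := expand_ex HT s r.
  apply/imsetP; exists [ffun i : 'I_s => f i] => //.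
  rewrite E Hs mul0r addr0 /phi; apply eq_bigr => i _; by rewrite ffunE.
move/subset_leq_card; rewrite cardsT => H; apply: leq_trans H _.
apply: leq_trans (leq_imset_card _ _) _.
by rewrite cardsT card_ffun !card_ord.
Qed.

End S.

Lemma nat_digit (Q a k i i' : nat) : (0 < Q)%N -> (a < Q)%N -> (i < k)%N -> (i' < k)%N ->
  ((a * Q ^ (k - 1 - i) %/ Q ^ (k - 1 - i')) %% Q = if i' == i then a else 0)%N.
Proof.
move=> Q0 aQ ik i'k.
case: (ltngtP i' i) => H.
- rewrite divn_small ?mod0n //.
  apply: (@leq_trans (Q * Q ^ (k - 1 - i))); first by rewrite ltn_pmul2r // expn_gt0 Q0.
  rewrite -expnS; apply: leq_pexp2l => //; lia.
- have -> : (k - 1 - i = (k - 1 - i') + (i' - i).-1.+1)%N by lia.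
  rewrite expnD mulnCA mulKn ?expn_gt0 ?Q0 //.
  by apply/eqP; rewrite -/(dvdn _ _) expnS mulnCA dvdn_mulr.
- by rewrite H mulnK ?expn_gt0 ?Q0 // modn_small.
Qed.

Theorem proposition3p1 (R : finComNzRingType) (gamma : R) (s q : nat)
    (T : seq R) (k : nat) :
  chain_ring_data gamma s -> coset_reps gamma q T -> (1 <= k)%N ->
  free_of_rank (simplex_code gamma s q T k) k.
Proof.
move=> [_ Hs _] HT k1.
have cardQ := @card_le _ _ _ _ _ HT Hs.
have surj : forall v : R, exists2 a, (a < q ^ s)%N & rho gamma s q T a = v.
  move=> v; rewrite /rho; set L := sort _ _.
  have vL : v \in L by rewrite mem_sort mem_enum.
  exists (index v L); last by rewrite nth_index.
  apply: leq_trans cardQ; rewrite cardE -(size_sort (chain_le gamma s q T)).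
  by rewrite index_mem.
have [b bQ _] := surj 0.
have Q0 : (0 < q ^ s)%N by apply: leq_ltn_trans bQ.
have [a aQ Ha] := surj (rho gamma s q T 0 + 1).
set G := simplex_alpha gamma s q T k.
have j0lt : (0 < q ^ (s * k))%N by rewrite expnM expn_gt0 Q0.
have jlt : forall i : 'I_k, (a * (q ^ s) ^ (k - 1 - i) < q ^ (s * k))%N.
  move=> i; rewrite expnM.
  apply: (@leq_trans ((q ^ s) * (q ^ s) ^ (k - 1 - i))); first by rewrite ltn_pmul2r // expn_gt0 Q0.
  rewrite -expnS; apply: leq_pexp2l => //; have := ltn_ord i; lia.
have colE : forall i i' : 'I_k,
   G i' (Ordinal (jlt i)) - G i' (Ordinal j0lt) = if i' == i then 1 else 0.
  move=> i i'; rewrite !mxE.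
  rewrite (_ : nat_of_ord (Ordinal (jlt i)) = a * (q^s)^(k-1-i))%N //.
  rewrite (_ : nat_of_ord (Ordinal j0lt) = 0)%N // div0n mod0n expnM.
  rewrite (@nat_digit _ _ _ _ _ Q0 aQ (ltn_ord i) (ltn_ord i')).
  have -> : ((i' : nat) == i) = (i' == i) by [].
  by case: ifP => _; [rewrite Ha addrAC subrr add0r | rewrite subrr].
exists (mulmxr G); split.
  move=> x y /= E; apply/eqP; rewrite -subr_eq0; apply/eqP.
  have Ez : (x - y) *m G = 0 by rewrite mulmxBl E subrr.
  apply/rowP => i.
  have := congr1 (fun M : 'rV_(q ^ (s * k)) => M 0 (Ordinal (jlt i)) - M 0 (Ordinal j0lt)) Ez.
  rewrite /= !mxE -sumrB.
  under eq_bigr => i' _ do rewrite -mulrBr colE.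
  rewrite (bigD1 i) //= eqxx mulr1 big1 ?addr0 ?subrr; first by rewrite !mxE.
  by move=> i' /negbTE ->; rewrite mulr0.
move=> v; rewrite /simplex_code; split.
  by move/existsP => [x /eqP ->]; exists x.
by move=> [x ->]; apply/existsP; exists x.
Qed.
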